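(* Let $Y\subset X$ be a subspace of the reflection space $X$. Then the natural map $\mathrm{Trans}(X)|_{Y}\to \mathrm{Trans}(Y)$ has central kernel.
   Context: A reflection space is a topological space $X$ with continuous $\mu:X\times X\to X$, $(x,y)\mapsto x.y$, satisfying $x.x=x$, $x.(x.y)=y$, $x.(y.z)=(x.y).(x.z)$; it is pointed with base point $o$, and $Y$ is a pointed sub-reflection space containing $o$. The elementary reflection at $x$ is $s_x:y\mapsto x.y$. $\mathrm{Trans}(Y)$ is the group generated by the $s_y\circ s_o$, $y\in Y$ (acting on $Y$), and $\mathrm{Trans}(X)|_{Y}:=\langle s_{y}\circ s_o\in\mathrm{Trans}(X)\mid y\in Y\rangle$ is the subgroup of $\mathrm{Trans}(X)$ generated by the corresponding maps on $X$. The natural map is induced by $s_{y}\circ s_o\mapsto s_y\circ s_o$ (restriction of the action to $Y$). *)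

(* Defs.v *)
From HB Require Import structures.
From mathcomp Require Import all_boot all_order.
From mathcomp Require Import boolp classical_sets topology.
Set Implicit Arguments. Unset Strict Implicit. Unset Printing Implicit Defensive.
Local Open Scope classical_set_scope.

Definition reflection_space (X : topologicalType) (mu : X -> X -> X) : Prop :=
  [/\ continuous (fun p : X * X => mu p.1 p.2),
      (forall x, mu x x = x),
      (forall x y, mu x (mu x y) = y) &
      (forall x y z, mu x (mu y z) = mu (mu x y) (mu x z))].

(* Y is a pointed sub-reflection space of (X, o): o \in Y and Y is closed
   under the multiplication (it carries the subspace topology, for which the
   restricted multiplication is automatically continuous). *)
Definition pointed_subspace (X : Type) (mu : X -> X -> X) (o : X) (Y : set X)
  : Prop := Y o /\ (forall x y, Y x -> Y y -> Y (mu x y)).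

Definition s_ (X : Type) (mu : X -> X -> X) (x : X) : X -> X := mu x.

(* Trans(X)|_Y : the subgroup of the group of bijections of X generated by
   the maps s_y \o s_o (y \in Y).  Its elements are the words in these
   generators and their inverses; the inverse of s_y \o s_o is s_o \o s_y,
   since each s_x is an involution. *)
Inductive TransXY (X : Type) (mu : X -> X -> X) (o : X) (Y : set X)
  : (X -> X) -> Prop :=
| TransXY_id : TransXY mu o Y id
| TransXY_gen g y : Y y -> TransXY mu o Y g ->
    TransXY mu o Y (s_ mu y \o s_ mu o \o g)
| TransXY_geninv g y : Y y -> TransXY mu o Y g ->
    TransXY mu o Y (s_ mu o \o s_ mu y \o g).

(* The natural map Trans(X)|_Y -> Trans(Y) is restriction of the action to Y;
   g lies in its kernel iff g acts trivially on Y. *)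
Definition in_natural_kernel (X : Type) (mu : X -> X -> X) (o : X)
  (Y : set X) (g : X -> X) : Prop :=
  TransXY mu o Y g /\ (forall y, Y y -> g y = y).

(* Main.v *)
Require Import Defs.
From HB Require Import structures.
From mathcomp Require Import all_boot all_order.
From mathcomp Require Import boolp classical_sets topology.

Lemma trans_auto (X : Type) (mu : X -> X -> X) (o : X) (Y : set X)
  (Hd : forall x y z, mu x (mu y z) = mu (mu x y) (mu x z)) g :
  TransXY mu o Y g -> forall a b, g (mu a b) = mu (g a) (g b).
Proof.
elim=> [a b //| g' y _ _ IH a b | g' y _ _ IH a b] /=; rewrite /s_ IH;
  by rewrite ?(Hd o (g' a)) ?(Hd y (g' a)) ?(Hd y (mu o (g' a))) ?(Hd o (mu y (g' a))).
Qed.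

Theorem lemma3p2 (X : topologicalType) (mu : X -> X -> X) (o : X)
  (Y : set X) :
  reflection_space mu -> pointed_subspace mu o Y ->
  forall g, in_natural_kernel mu o Y g ->
  forall h, TransXY mu o Y h -> g \o h = h \o g.
Proof.
move=> [_ _ _ Hd] [Yo _] g [Tg Fg] h Th.
have A := @trans_auto X mu o Y Hd g Tg.
apply: funext => x0 /=.
elim: h / Th x0 => [//| h y Yy _ IH x | h y Yy _ IH x] /=;
  by rewrite /s_ !A Fg // Fg // IH.
Qed.
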